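(* Let $A$ be a group, $\mathcal{O}$ a finite collection of infinite subgroups and $X\subseteq A$ with $\mathcal{O}\hookrightarrow_h(A,X)$, and suppose the coned-off Cayley graph $\hat{\mathcal{A}}=\hat\Gamma(A,\mathcal{O},X)$ is $\delta$-hyperbolic. For all $k,l>0$ there exists $\lambda=\lambda(\delta,k,l)$ such that: if $a\in\hat{\mathcal{A}}$ is an apex, $c_1,c_2$ are $(k,l)$-quasi-geodesics sharing the endpoint $a$ and not passing through $a$ elsewhere, and $\gamma_1,\gamma_2$ are geodesics with the same endpoints as $c_1,c_2$ respectively, then $\angle_a(c_1,c_2)-\lambda\le\angle_a(\gamma_1,\gamma_2)\le\angle_a(c_1,c_2)+\lambda$. In particular $\angle_a(c_1,c_2)=\infty$ if and only if $\angle_a(\gamma_1,\gamma_2)=\infty$.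
   Context: $\hat\Gamma(A,\mathcal{O},X)$ has vertex set $A\sqcup\bigsqcup_{O\in\mathcal{O}}A/O$ (the cosets are apices), edges $\{g,gx\}$ for $x\in X$ and cone edges $\{g,gO\}$; it carries the combinatorial metric. $\mathcal{O}\hookrightarrow_h(A,X)$: $A=\langle X\cup\bigcup\mathcal{O}\rangle$, the Cayley graph with respect to $X\sqcup\bigsqcup\mathcal{O}$ is hyperbolic and each $O\in\mathcal{O}$ is locally finite for $\hat d_O(h,k)$ = length of a shortest path $h\to k$ in that Cayley graph using no edge labelled by an element of $O$ with both endpoints in $O$. For a vertex $v$ and neighbours $x,y$, $\angle_v(x,y)$ is the length of a shortest path from $x$ to $y$ avoiding $v$ ($\infty$ if none). For paths $c_1,c_2$ starting at $v$, $\angle_v(c_1,c_2)=\angle_v(x,y)$ where $x$ (resp. $y$) is the first vertex of $c_1$ (resp. $c_2$) adjacent to $v$. *)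

(* Defs.v *)
From Stdlib Require Import Reals List Classical ClassicalEpsilon.
From Coquelicot Require Import Rbar.
Import ListNotations.
Open Scope R_scope.

Record group := Group {
  gcar :> Type;
  gmul : gcar -> gcar -> gcar;
  ginv : gcar -> gcar;
  gone : gcar;
  gmulA : forall x y z, gmul x (gmul y z) = gmul (gmul x y) z;
  gmul1l : forall x, gmul gone x = x;
  gmulVl : forall x, gmul (ginv x) x = gone
}.
Arguments gmul {g}.
Arguments ginv {g}.
Arguments gone {g}.

Definition subgroup {A : group} (H : A -> Prop) : Prop :=
  H gone /\ (forall x y, H x -> H y -> H (gmul x y)) /\
  (forall x, H x -> H (ginv x)).

Definition infinite_set {T : Type} (S : T -> Prop) : Prop :=
  forall l : list T, exists x, S x /\ ~ In x l.

Definition finite_type (I : Type) : Prop := exists l : list I, forall i, In i l.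

Inductive generated {A : group} (S : A -> Prop) : A -> Prop :=
| gen_one : generated S gone
| gen_mul : forall g s, generated S g -> S s -> generated S (gmul g s)
| gen_mulV : forall g s, generated S g -> S s -> generated S (gmul g (ginv s)).

Section Graphs.
Variable V : Type.
Variable adj : V -> V -> Prop.

Fixpoint walk (u : V) (p : list V) (v : V) : Prop :=
  match p with
  | [] => u = v
  | x :: p' => adj u x /\ walk x p' v
  end.

Definition reach (n : nat) (u v : V) : Prop :=
  exists p, walk u p v /\ length p = n.

Definition dist_is (u v : V) (n : nat) : Prop :=
  reach n u v /\ forall m, reach m u v -> (n <= m)%nat.

(* Combinatorial (graph) distance; its value is irrelevant (0) when u, v
   lie in different components. *)
Definition gdist (u v : V) : nat :=
  match excluded_middle_informative (exists n, dist_is u v n) with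
  | left H => proj1_sig (constructive_indefinite_description _ H)
  | right _ => 0%nat
  end.

Definition connected : Prop := forall u v, exists n, reach n u v.

Definition gromov (x y w : V) : R :=
  (INR (gdist x w) + INR (gdist y w) - INR (gdist x y)) / 2.

(* delta-hyperbolicity (Gromov four-point condition for the graph metric). *)
Definition hyperbolic_graph (delta : R) : Prop :=
  connected /\
  forall x y z w, gromov x z w >= Rmin (gromov x y w) (gromov y z w) - delta.

Fixpoint chain (q : list V) : Prop :=
  match q with
  | x :: ((y :: _) as t) => adj x y /\ chain t
  | _ => True
  end.

Definition quasi_geodesic (k l : R) (q : list V) : Prop :=
  q <> [] /\ chain q /\
  forall i j x y, (i <= j)%nat -> nth_error q i = Some x -> nth_error q j = Some y ->
    INR (j - i) <= k * INR (gdist x y) + l.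

Definition geodesic (q : list V) : Prop :=
  match q with
  | [] => False
  | x :: r => chain q /\ length r = gdist x (last q x)
  end.

Definition avoid_reach (v : V) (n : nat) (x y : V) : Prop :=
  exists p, walk x p y /\ length p = n /\ x <> v /\ ~ In v p.

Definition avoid_dist_is (v x y : V) (n : nat) : Prop :=
  avoid_reach v n x y /\ forall m, avoid_reach v m x y -> (n <= m)%nat.

Definition angle_pts (v x y : V) : Rbar :=
  match excluded_middle_informative (exists n, avoid_dist_is v x y n) with
  | left H => Finite (INR (proj1_sig (constructive_indefinite_description _ H)))
  | right _ => p_infty
  end.

(* Angle at v between paths v :: r1 and v :: r2: the angle between the
   first vertices after v (which are adjacent to v). *)
Definition angle_paths (v : V) (r1 r2 : list V) : Rbar :=
  angle_pts v (hd v r1) (hd v r2).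

End Graphs.

Arguments walk {V}. Arguments reach {V}. Arguments gdist {V}.
Arguments connected {V}. Arguments hyperbolic_graph {V}.
Arguments chain {V}. Arguments quasi_geodesic {V}. Arguments geodesic {V}.
Arguments angle_pts {V}. Arguments angle_paths {V}.

Section Embedding.
Variable A : group.
Variable I : Type.
Variable O : I -> A -> Prop.
Variable X : A -> Prop.

Inductive letter := LX (x : A) | LO (i : I) (o : A).

Definition letter_ok (s : letter) : Prop :=
  match s with LX x => X x | LO i o => O i o end.

Definition letter_val (s : letter) : A :=
  match s with LX x => x | LO _ o => o end.

Definition cay_edge (s : letter) (u v : A) : Prop :=
  letter_ok s /\ (v = gmul u (letter_val s) \/ u = gmul v (letter_val s)).

Definition cay_adj (u v : A) : Prop := exists s, cay_edge s u v.

(* Edges allowed for dhat_{O_i}: no edge labelled by a letter of O_i with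
   both endpoints in O_i. *)
Definition rel_adj (i : I) (u v : A) : Prop :=
  exists s, cay_edge s u v /\
    ~ ((exists o, s = LO i o) /\ O i u /\ O i v).

Definition locally_finite_rel (i : I) : Prop :=
  forall h0 (n : nat), O i h0 ->
    exists l : list A, forall h, O i h ->
      (exists m, (m <= n)%nat /\ reach (rel_adj i) m h0 h) -> In h l.

Definition hyp_embedded : Prop :=
  (forall g : A, generated (fun s => X s \/ exists i, O i s) g) /\
  (exists delta, hyperbolic_graph cay_adj delta) /\
  (forall i, locally_finite_rel i).

Definition is_lcoset (i : I) (C : A -> Prop) : Prop :=
  exists g, forall h, C h <-> O i (gmul (ginv g) h).

(* Apices: pairs (i, gO_i), cosets represented as subsets of A. *)
Definition apex : Type := { c : I * (A -> Prop) | is_lcoset (fst c) (snd c) }.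

Definition cvertex : Type := (A + apex)%type.

Definition cone_adj (u v : cvertex) : Prop :=
  match u, v with
  | inl g, inl h => exists x, X x /\ (h = gmul g x \/ g = gmul h x)
  | inl g, inr c => snd (proj1_sig c) g
  | inr c, inl g => snd (proj1_sig c) g
  | inr _, inr _ => False
  end.

End Embedding.

Arguments hyp_embedded {A I}.
Arguments cone_adj {A I}.
Arguments cvertex {A I}.

(* Main.v *)
Require Import Defs.
From Stdlib Require Import Reals List Lia Lra Classical ClassicalEpsilon Arith ZArith.
From Coquelicot Require Import Rbar.
Import ListNotations.
Open Scope R_scope.

Lemma nat_above (r : R) : exists n : nat, r <= INR n.
Proof.
  destruct (archimed r) as [H _].
  destruct (Z_lt_le_dec (up r) 0) as [Hl|Hl].
  - exists 0%nat; simpl. apply IZR_lt in Hl. lra.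
  - exists (Z.to_nat (up r)). rewrite INR_IZR_INZ, Z2Nat.id by lia; lra.
Qed.

Lemma least_nat (P : nat -> Prop) : (exists n, P n) -> exists n, P n /\ forall m, P m -> (n <= m)%nat.
Proof.
  intros [n Hn]. revert Hn. induction n as [n IH] using (well_founded_induction lt_wf).
  intros Hn. destruct (classic (exists m, (m < n)%nat /\ P m)) as [[m [Hm Pm]]|H].
  - exact (IH m Hm Pm).
  - exists n; split; auto. intros m Pm. destruct (le_lt_dec n m); auto.
    exfalso; apply H; eauto.
Qed.

Lemma last_irrel {T} (l : list T) y d1 d2 : last (y::l) d1 = last (y::l) d2.
Proof. revert y; induction l as [|z l IH]; intros y; [reflexivity|].
  change (last (z::l) d1 = last (z::l) d2). apply IH. Qed.

Lemma last_in {T} (l : list T) x : In (last (x::l) x) (x::l).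
Proof.
  revert x; induction l as [|y l IH]; intros x; [simpl; auto|].
  change (In (last (y::l) x) (x::y::l)). right. rewrite (last_irrel l y x y). apply IH.
Qed.

Lemma nth_error_last {T} (l : list T) x : nth_error (x::l) (length l) = Some (last (x::l) x).
Proof.
  revert x; induction l as [|y l IH]; intros x; [simpl; auto|].
  change (nth_error (y::l) (length l) = Some (last (y::l) x)).
  rewrite IH. f_equal. apply last_irrel.
Qed.

Lemma pow_sq (m : nat) : ((m+4)*(m+4) <= 2^(m+4))%nat.
Proof.
  induction m as [|m IH]; [simpl; lia|].
  replace (S m + 4)%nat with (S (m+4)) by lia. rewrite Nat.pow_succ_r'. nia.
Qed.

Section G.
Variable V : Type.
Variable adj : V -> V -> Prop.
Hypothesis Hsym : forall u v, adj u v -> adj v u.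
Hypothesis Hconn : connected adj.

Notation d := (gdist adj).

Lemma walk_app : forall p q u v w, walk adj u p v -> walk adj v q w -> walk adj u (p ++ q) w.
Proof.
  induction p as [|x p IH]; simpl; intros q u v w H1 H2.
  - subst; auto.
  - destruct H1; split; eauto.
Qed.

Lemma walk_app_inv : forall p q u w, walk adj u (p ++ q) w ->
  walk adj u p (last (u::p) u) /\ walk adj (last (u::p) u) q w.
Proof.
  induction p as [|x p IH]; intros q u w H.
  - simpl in *; auto.
  - destruct H as [H1 H2]. apply IH in H2.
    change (last (u::x::p) u) with (last (x::p) u). rewrite (last_irrel p x u x).
    simpl; tauto.
Qed.

Lemma walk_rev : forall p u v, walk adj u p v -> exists p', walk adj v p' u /\
  length p' = length p /\ forall w, In w p' -> w = u \/ In w p.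
Proof.
  induction p as [|x p IH]; simpl; intros u v H.
  - subst. exists []; simpl; repeat split; tauto.
  - destruct H as [H1 H2]. destruct (IH _ _ H2) as [p' [W [Lp Hp]]].
    exists (p' ++ [u]). repeat split.
    + apply walk_app with x; auto. simpl; auto.
    + rewrite length_app; simpl; lia.
    + intros w Hw. apply in_app_or in Hw. destruct Hw as [Hw|Hw].
      * destruct (Hp w Hw); auto.
      * simpl in Hw; destruct Hw as [Hw|[]]; auto.
Qed.

Lemma gdist_spec u v : dist_is _ adj u v (d u v).
Proof.
  unfold gdist. destruct (excluded_middle_informative _) as [H|H].
  - destruct (constructive_indefinite_description _ H); simpl; auto.
  - exfalso; apply H. destruct (least_nat (fun n => reach adj n u v)) as [n Hn].
    apply Hconn. exists n; exact Hn.
Qed.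

Lemma gdist_walk u v : exists p, walk adj u p v /\ length p = d u v.
Proof. destruct (gdist_spec u v) as [[p Hp] _]. eauto. Qed.

Lemma walk_len u p v : walk adj u p v -> (d u v <= length p)%nat.
Proof. intros W. destruct (gdist_spec u v) as [_ H]. apply H. exists p; auto. Qed.

Lemma gdist_refl u : d u u = 0%nat.
Proof. assert (H := walk_len u [] u eq_refl). simpl in H; lia. Qed.

Lemma gdist_zero u v : d u v = 0%nat -> u = v.
Proof. intros H. destruct (gdist_walk u v) as [p [W L]]. rewrite H in L.
  destruct p; [exact W|discriminate]. Qed.

Lemma gdist_sym u v : d u v = d v u.
Proof.
  assert (forall x y, (d x y <= d y x)%nat).
  { intros x y. destruct (gdist_walk y x) as [p [W L]].
    destruct (walk_rev _ _ _ W) as [p' [W' [L' _]]]. rewrite <- L, <- L'. apply walk_len; auto. }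
  pose proof (H u v); pose proof (H v u); lia.
Qed.

Lemma gdist_tri u v w : (d u w <= d u v + d v w)%nat.
Proof.
  destruct (gdist_walk u v) as [p [W L]]. destruct (gdist_walk v w) as [q [W' L']].
  rewrite <- L, <- L', <- length_app. apply walk_len. eapply walk_app; eauto.
Qed.

Lemma walk_pre u p w v : walk adj u p w -> In v (u::p) -> (d u v <= length p)%nat.
Proof.
  intros W Hv. destruct Hv as [Hv|Hv].
  - subst. rewrite gdist_refl. lia.
  - destruct (in_split _ _ Hv) as [l1 [l2 E]]. subst p.
    apply walk_app_inv in W. destruct W as [W1 W2].
    assert (E : last (u::l1) u = v \/ True) by auto.
    simpl in W2. destruct W2 as [A1 A2].
    pose proof (walk_len _ _ _ W1).
    pose proof (gdist_tri u (last (u::l1) u) v).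
    assert (d (last (u :: l1) u) v <= 1)%nat.
    { apply (walk_len _ [v]). simpl; auto. }
    rewrite length_app; simpl; lia.
Qed.

Lemma walk_suf u p w v : walk adj u p w -> In v (u::p) -> (d v w <= length p)%nat.
Proof.
  intros W Hv. destruct Hv as [Hv|Hv].
  - subst. apply walk_len; auto.
  - destruct (in_split _ _ Hv) as [l1 [l2 E]]. subst p.
    apply walk_app_inv in W. destruct W as [W1 W2].
    simpl in W2. destruct W2 as [A1 A2].
    pose proof (walk_len _ _ _ A2). rewrite length_app; simpl; lia.
Qed.

Lemma gdist_adj u v : adj u v -> (d u v <= 1)%nat.
Proof. intros H. apply (walk_len u [v]). simpl; auto. Qed.

Definition fmin (f : V -> nat) (b : V) (l : list V) : nat :=
  fold_right (fun p acc => Nat.min (f p) acc) (f b) l.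

Lemma fmin_le f b l p : In p (b::l) -> (fmin f b l <= f p)%nat.
Proof.
  induction l as [|x l IH]; simpl; intros H.
  - destruct H as [H|[]]; subst; lia.
  - destruct H as [H|[H|H]]; subst.
    + specialize (IH (or_introl eq_refl)). lia.
    + lia.
    + specialize (IH (or_intror H)). lia.
Qed.

Lemma fmin_ex f b l : exists p, In p (b::l) /\ f p = fmin f b l.
Proof.
  induction l as [|x l IH]; simpl.
  - exists b; auto.
  - destruct IH as [p [H1 H2]]. destruct (le_lt_dec (f x) (fmin f b l)).
    + exists x; split; auto. lia.
    + exists p; split. destruct H1; auto. lia.
Qed.

Lemma fmax_ex (g : V -> nat) b l : exists q, In q (b::l) /\ forall q', In q' (b::l) -> (g q' <= g q)%nat.
Proof.
  induction l as [|x l IH].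
  - exists b; split; simpl; auto. intros q' [H|[]]; subst; lia.
  - destruct IH as [q [H1 H2]]. destruct (le_lt_dec (g x) (g q)).
    + exists q; split. destruct H1; simpl; auto.
      intros q' [H|[H|H]]; subst; auto; apply H2; simpl; auto.
    + exists x; split. simpl; auto.
      intros q' [H|[H|H]]; subst; auto.
      * specialize (H2 q' (or_introl eq_refl)); lia.
      * specialize (H2 q' (or_intror H)); lia.
Qed.

Lemma chain_tail (x : V) L : chain adj (x::L) -> chain adj L.
Proof. destruct L; simpl; tauto. Qed.

Lemma sub_walk : forall L i j u v, chain adj L -> (i <= j)%nat ->
  nth_error L i = Some u -> nth_error L j = Some v ->
  exists p, walk adj u p v /\ length p = (j - i)%nat /\
    forall w, In w p -> exists t, (i < t <= j)%nat /\ nth_error L t = Some w.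
Proof.
  induction L as [|x L IH]; intros i j u v HC Hij Hu Hv.
  - destruct i; discriminate.
  - destruct i as [|i].
    + simpl in Hu. injection Hu as <-. destruct j as [|j].
      * simpl in Hv. injection Hv as <-. exists []. simpl; repeat split; auto. intros w [].
      * simpl in Hv. destruct L as [|y L]; [destruct j; discriminate|].
        destruct HC as [Hxy HC].
        destruct (IH 0%nat j y v HC ltac:(lia) eq_refl Hv) as [p [W [Lp Hp]]].
        exists (y::p). repeat split; simpl; auto. lia.
        intros w [Hw|Hw].
        -- subst. exists 1%nat. split; [lia|reflexivity].
        -- destruct (Hp w Hw) as [t [Ht Ht']]. exists (S t). split; [lia|exact Ht'].
    + destruct j as [|j]; [lia|]. simpl in Hu, Hv.
      destruct (IH i j u v (chain_tail _ _ HC) ltac:(lia) Hu Hv) as [p [W [Lp Hp]]].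
      exists p. repeat split; auto.
      intros w Hw. destruct (Hp w Hw) as [t [Ht Ht']]. exists (S t). split; [lia|exact Ht'].
Qed.


Variable delta : R.
Hypothesis H4 : forall x y z w, gromov _ adj x z w >= Rmin (gromov _ adj x y w) (gromov _ adj y z w) - delta.

Lemma delta_nonneg (v : V) : 0 <= delta.
Proof.
  specialize (H4 v v v v). unfold gromov in H4. rewrite gdist_refl in H4.
  unfold Rmin in H4. destruct Rle_dec; simpl in H4; lra.
Qed.

Lemma log_lemma (v0 : V) : forall j p x z w (r : R), walk adj x p z -> (length p <= 2^j)%nat ->
  (forall v, In v (x::p) -> r <= INR (d v w)) -> gromov _ adj x z w >= r - 1 - INR j * delta.
Proof.
  pose proof (delta_nonneg v0) as Hd.
  induction j as [|j IH]; intros p x z w r W Lp Hv.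
  - simpl in Lp. unfold gromov. simpl.
    destruct p as [|y p]; [|destruct p; [|simpl in Lp; lia]].
    + simpl in W; subst. rewrite gdist_refl. specialize (Hv z (or_introl eq_refl)). simpl. lra.
    + simpl in W. destruct W as [A E]; subst y.
      pose proof (gdist_adj _ _ A) as Hl. apply le_INR in Hl.
      pose proof (Hv x (or_introl eq_refl)). pose proof (Hv z (or_intror (or_introl eq_refl))).
      simpl in Hl. lra.
  - rewrite S_INR.
    destruct (le_lt_dec (length p) (2^j)) as [Hle|Hlt].
    + specialize (IH p x z w r W Hle Hv). nra.
    + assert (Hp : p = firstn (2^j) p ++ skipn (2^j) p) by (symmetry; apply firstn_skipn).
      rewrite Hp in W.
      set (p1 := firstn (2^j) p) in *. set (p2 := skipn (2^j) p) in *.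
      apply walk_app_inv in W. destruct W as [W1 W2].
      set (y := last (x::p1) x) in *.
      assert (L1 : length p1 = (2^j)%nat) by (apply firstn_length_le; simpl in Lp; lia).
      assert (L2 : (length p2 <= 2^j)%nat) by (unfold p2; rewrite length_skipn; simpl in Lp; lia).
      assert (Hin1 : forall v, In v (x::p1) -> In v (x::p)).
      { intros v [Hv'|Hv']; [left; auto|right]. rewrite Hp. apply in_or_app; auto. }
      assert (Hin2 : forall v, In v (y::p2) -> In v (x::p)).
      { intros v [Hv'|Hv'].
        - apply Hin1. rewrite <- Hv'. apply last_in.
        - right. rewrite Hp. apply in_or_app; auto. }
      assert (G1 := IH p1 x y w r W1 (Nat.eq_le_incl _ _ L1) (fun v H => Hv v (Hin1 v H))).
      assert (G2 := IH p2 y z w r W2 L2 (fun v H => Hv v (Hin2 v H))).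
      specialize (H4 x y z w). unfold Rmin in H4. destruct Rle_dec; lra.
Qed.

Lemma exists_j (L : nat) : exists j, (L <= 2^j)%nat /\ (j = 0 \/ 2^(j-1) < L)%nat.
Proof.
  destruct (le_lt_dec L 1) as [H|H].
  - exists 0%nat. simpl. lia.
  - exists (Nat.log2_up L). destruct (Nat.log2_up_spec L H) as [H1 H2].
    split; auto. right. rewrite Nat.sub_1_r. exact H1.
Qed.

Variables k l : R.
Hypothesis Hk : 0 < k.
Hypothesis Hl : 0 < l.
Variable Rm : nat.
Hypothesis HR : forall D L j : nat, INR L <= (2 + 6*k) * INR D + l ->
  (j = 0 \/ 2^(j-1) < L)%nat -> INR D <= 1 + INR j * delta -> (D <= Rm)%nat.

Variable a : V.
Variables rc sg : list V.
Hypothesis Hcc : chain adj (a::rc).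
Hypothesis HQ : forall i j x y, (i <= j)%nat -> nth_error (a::rc) i = Some x -> nth_error (a::rc) j = Some y ->
    INR (j - i) <= k * INR (d x y) + l.
Hypothesis Hcg : chain adj (a::sg).
Hypothesis Hgeo : length sg = d a (last (a::sg) a).
Hypothesis Hlast : last (a::sg) a = last (a::rc) a.

Lemma nth_lt {T} (L : list T) i u : nth_error L i = Some u -> (i < length L)%nat.
Proof. intros H. apply nth_error_Some. rewrite H; discriminate. Qed.

Lemma geo_dist i j u v : (i <= j)%nat -> nth_error (a::sg) i = Some u -> nth_error (a::sg) j = Some v ->
  d u v = (j - i)%nat.
Proof.
  intros Hij Hu Hv.
  pose proof (nth_lt _ _ _ Hv) as Hjn. simpl in Hjn.
  destruct (sub_walk _ _ _ _ _ Hcg Hij Hu Hv) as [p [W [Lp _]]].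
  destruct (sub_walk _ 0 i _ _ Hcg ltac:(lia) eq_refl Hu) as [p1 [W1 [L1 _]]].
  destruct (sub_walk _ j (length sg) _ _ Hcg ltac:(lia) Hv (nth_error_last sg a)) as [p2 [W2 [L2 _]]].
  apply walk_len in W, W1, W2.
  pose proof (gdist_tri a u (last (a::sg) a)). pose proof (gdist_tri u v (last (a::sg) a)).
  lia.
Qed.

Lemma geo_noa : ~ In a sg.
Proof.
  intros H. destruct (In_nth_error _ _ H) as [t Ht].
  assert (E := geo_dist 0 (S t) a a ltac:(lia) eq_refl Ht). rewrite gdist_refl in E. lia.
Qed.

Lemma seg u v : In u (a::rc) -> In v (a::rc) -> exists P, walk adj u P v /\
  INR (length P) <= k * INR (d u v) + l /\ forall w, In w P -> In w (a::rc).
Proof.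
  intros Hu Hv. destruct (In_nth_error _ _ Hu) as [iu Hiu]. destruct (In_nth_error _ _ Hv) as [iv Hiv].
  destruct (le_lt_dec iu iv) as [H|H].
  - destruct (sub_walk _ _ _ _ _ Hcc H Hiu Hiv) as [p [W [Lp Hp]]].
    exists p. repeat split; auto.
    + rewrite Lp. apply HQ; auto.
    + intros w Hw. destruct (Hp w Hw) as [t [_ Ht]]. eapply nth_error_In; eauto.
  - destruct (sub_walk _ _ _ _ _ Hcc (Nat.lt_le_incl _ _ H) Hiv Hiu) as [p [W [Lp Hp]]].
    destruct (walk_rev _ _ _ W) as [p' [W' [Lp' Hp']]].
    exists p'. repeat split; auto.
    + rewrite Lp', Lp, gdist_sym. apply HQ; auto. lia.
    + intros w Hw. destruct (Hp' w Hw) as [E|Hw'].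
      * subst; auto.
      * destruct (Hp w Hw') as [t [_ Ht]]. eapply nth_error_In; eauto.
Qed.

Definition mind (q : V) := fmin (d q) a rc.

Lemma some_nth {T} (L : list T) i : (i < length L)%nat -> exists u, nth_error L i = Some u.
Proof. intros H. destruct (nth_error L i) eqn:E; eauto. apply nth_error_None in E. lia. Qed.

Lemma morse q : In q (a::sg) -> exists p, In p (a::rc) /\ (d q p <= Rm)%nat.
Proof.
  intros Hq.
  destruct (fmax_ex mind a sg) as [q0 [Hq0 Hmax]].
  set (D := mind q0).
  assert (Hlast_in : In (last (a::sg) a) (a::rc)) by (rewrite Hlast; apply last_in).
  assert (HDq : forall v, In v (a::rc) -> (D <= d v q0)%nat).
  { intros v Hv. unfold D, mind. rewrite gdist_sym. apply fmin_le; auto. }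
  assert (Hm0 : forall v, In v (a::rc) -> mind v = 0%nat).
  { intros v Hv. pose proof (fmin_le (d v) a rc v Hv). rewrite gdist_refl in H. unfold mind. lia. }
  enough (HD : (D <= Rm)%nat).
  { destruct (fmin_ex (d q) a rc) as [p [Hp Ep]]. exists p; split; auto.
    specialize (Hmax q Hq). fold (mind q) in Ep. unfold D in HD. lia. }
  destruct (In_nth_error _ _ Hq0) as [t Ht].
  pose proof (nth_lt _ _ _ Ht) as Htn. simpl in Htn.
  set (n := length sg) in *.
  set (ty := (t - 2*D)%nat). set (tz := Nat.min (t + 2*D) n).
  destruct (some_nth (a::sg) ty ltac:(simpl; lia)) as [y Hy].
  destruct (some_nth (a::sg) tz ltac:(simpl; lia)) as [z Hz].
  assert (My : (mind y <= D)%nat) by (apply Hmax; eapply nth_error_In; eauto).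
  assert (Mz : (mind z <= D)%nat) by (apply Hmax; eapply nth_error_In; eauto).
  assert (Cy : (D + mind y <= d y q0)%nat).
  { destruct (le_lt_dec (2*D) t) as [H|H].
    - rewrite (geo_dist ty t y q0); auto; unfold ty; lia.
    - assert (ty = 0%nat) by (unfold ty; lia).
      rewrite H0 in Hy. simpl in Hy. injection Hy as <-.
      rewrite Hm0 by (left; auto). rewrite Nat.add_0_r. apply HDq. left; auto. }
  assert (Cz : (D + mind z <= d z q0)%nat).
  { destruct (le_lt_dec (t + 2*D) n) as [H|H].
    - rewrite gdist_sym, (geo_dist t tz q0 z); auto; unfold tz; lia.
    - assert (tz = n) by (unfold tz; lia).
      rewrite H0 in Hz. unfold n in Hz. rewrite nth_error_last in Hz. injection Hz as <-.
      rewrite Hm0 by auto. rewrite Nat.add_0_r. apply HDq; auto. }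
  destruct (fmin_ex (d y) a rc) as [y' [Hy' Ey']].
  destruct (fmin_ex (d z) a rc) as [z' [Hz' Ez']].
  fold (mind y) in Ey'. fold (mind z) in Ez'.
  destruct (gdist_walk y y') as [P1 [W1 L1]].
  destruct (seg y' z' Hy' Hz') as [P2 [W2 [L2 H2]]].
  destruct (gdist_walk z' z) as [P3 [W3 L3]].
  assert (W : walk adj y (P1 ++ P2 ++ P3) z) by (eapply walk_app; eauto; eapply walk_app; eauto).
  assert (Hyz : d y z = (tz - ty)%nat) by (apply geo_dist; auto; unfold ty, tz; lia).
  assert (Hyq : d y q0 = (t - ty)%nat) by (apply geo_dist; auto; unfold ty; lia).
  assert (Hqz : d q0 z = (tz - t)%nat) by (apply geo_dist; auto; unfold tz; lia).
  assert (Hall : forall v, In v (y :: P1 ++ P2 ++ P3) -> INR D <= INR (d v q0)).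
  { intros v Hv. apply le_INR.
    assert (Hv' : In v (y::P1) \/ In v P2 \/ In v (z'::P3)).
    { destruct Hv as [Hv|Hv]; [left; left; auto|].
      apply in_app_or in Hv. destruct Hv as [Hv|Hv]; [left; right; auto|].
      apply in_app_or in Hv. destruct Hv as [Hv|Hv]; [right; left; auto|right; right; right; auto]. }
    clear Hv; destruct Hv' as [Hv|[Hv|Hv]].
    - pose proof (walk_pre _ _ _ _ W1 Hv). pose proof (gdist_tri y v q0). lia.
    - apply HDq; auto.
    - pose proof (walk_suf _ _ _ _ W3 Hv). pose proof (gdist_tri z v q0).
      rewrite gdist_sym in L3. rewrite (gdist_sym z v) in H0. lia. }
  set (L := length (P1 ++ P2 ++ P3)).
  assert (HL : INR L <= (2 + 6*k) * INR D + l).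
  { unfold L. rewrite !length_app, !plus_INR.
    pose proof (gdist_tri y' y z). pose proof (gdist_tri y' z z').
    rewrite (gdist_sym y' y) in H.
    assert (Htt : (tz - ty <= 4*D)%nat) by (unfold tz, ty; lia).
    assert (Hb : (d y' z' <= 6 * D)%nat) by lia.
    apply le_INR in Hb. rewrite mult_INR in Hb. simpl in Hb.
    assert (k * INR (d y' z') <= k * ((1+1+1+1+1+1) * INR D)) by (apply Rmult_le_compat_l; lra).
    rewrite L1, L3, (gdist_sym z' z). apply le_INR in My, Mz. rewrite Ey', Ez'. lra. }
  destruct (exists_j L) as [j [Hj1 Hj2]].
  pose proof (log_lemma a j _ y z q0 (INR D) W Hj1 Hall) as G.
  unfold gromov in G. rewrite Hyq, (gdist_sym z q0), Hqz, Hyz in G.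
  assert (E : INR (t - ty) + INR (tz - t) - INR (tz - ty) = 0).
  { rewrite <- plus_INR. replace (t - ty + (tz - t))%nat with (tz - ty)%nat by (unfold ty, tz in *; lia). lra. }
  rewrite E in G.
  apply (HR D L j); auto. lra.
Qed.

Lemma key : rc <> [] -> ~ In a rc ->
  exists N : nat, INR N <= k * INR (Rm + 1 + Rm) + l + INR Rm + INR (Rm + 1) /\
    avoid_reach V adj a N (hd a rc) (hd a sg).
Proof.
  intros Hne Hna.
  set (x1 := hd a rc). set (y1 := hd a sg).
  set (e := last (a::sg) a).
  assert (Hrc_a : forall t w, nth_error (a::rc) (S t) = Some w -> w <> a).
  { intros t w H E. subst. apply Hna. eapply nth_error_In; eauto. }
  assert (Hsg_a : forall t w, nth_error (a::sg) (S t) = Some w -> w <> a).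
  { intros t w H E. subst. apply geo_noa. eapply nth_error_In; eauto. }
  assert (Hm1 : (1 <= length rc)%nat) by (destruct rc; [congruence|simpl; lia]).
  assert (Hem : nth_error (a::rc) (length rc) = Some e).
  { rewrite nth_error_last. unfold e. rewrite Hlast. reflexivity. }
  assert (Hea : e <> a).
  { destruct (length rc) as [|t] eqn:E; [lia|]. exact (Hrc_a t e Hem). }
  assert (Hx1 : nth_error (a::rc) 1 = Some x1) by (unfold x1; destruct rc; [congruence|reflexivity]).
  assert (Hn1 : (1 <= length sg)%nat).
  { destruct sg; [|simpl; lia]. exfalso. apply Hea. reflexivity. }
  assert (Hy1 : nth_error (a::sg) 1 = Some y1) by (unfold y1; destruct sg; [simpl in Hn1; lia|reflexivity]).
  assert (Hx1a : x1 <> a) by (exact (Hrc_a 0%nat x1 Hx1)).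
  set (n := length sg).
  fold n in Hn1.
  assert (Hkn : 0 <= k) by lra.
  destruct (le_lt_dec n (Rm + 1)) as [Hsmall|Hbig].
  -
    assert (Hen : nth_error (a::sg) n = Some e) by (apply nth_error_last).
    destruct (sub_walk _ 1 (length rc) _ _ Hcc Hm1 Hx1 Hem) as [P [WP [LP HP]]].
    destruct (sub_walk _ 1 n _ _ Hcg Hn1 Hy1 Hen) as [Q [WQ [LQ HQ']]].
    destruct (walk_rev _ _ _ WQ) as [Q' [WQ' [LQ' HQ'']]].
    exists (length (P ++ Q')). split.
    + assert (Hm := HQ 0 (length rc) a e ltac:(lia) eq_refl Hem).
      rewrite Nat.sub_0_r in Hm. unfold e in Hm. rewrite <- Hgeo in Hm. fold n in Hm.
      assert (Hb : (length (P ++ Q') <= length rc + n)%nat) by (rewrite length_app; lia).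
      apply le_INR in Hb. rewrite plus_INR in Hb.
      assert (k * INR n <= k * INR (Rm + 1 + Rm)).
      { apply Rmult_le_compat_l; auto. apply le_INR; lia. }
      apply le_INR in Hsmall.
      pose proof (pos_INR Rm). lra.
    + exists (P ++ Q'). repeat split; auto.
      * eapply walk_app; eauto.
      * intros Hin. apply in_app_or in Hin. destruct Hin as [Hin|Hin].
        -- destruct (HP a Hin) as [t [Ht Ht']]. destruct t; [lia|]. exact (Hrc_a t a Ht' eq_refl).
        -- destruct (HQ'' a Hin) as [E|Hin'].
           ++ exact (Hsg_a 0%nat y1 Hy1 (eq_sym E)).
           ++ destruct (HQ' a Hin') as [t [Ht Ht']]. destruct t; [lia|]. exact (Hsg_a t a Ht' eq_refl).
  -
    set (Dd := (Rm + 1)%nat).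
    destruct (some_nth (a::sg) Dd ltac:(simpl; unfold Dd, n in *; lia)) as [q Hq].
    assert (Haq : d a q = Dd) by (rewrite (geo_dist 0 Dd a q); auto; lia).
    destruct (morse q ltac:(eapply nth_error_In; eauto)) as [p [Hp Hqp]].
    destruct (In_nth_error _ _ Hp) as [ip Hip].
    assert (Hpa : p <> a).
    { intros E. subst p. rewrite gdist_sym in Hqp. unfold Dd in Haq. lia. }
    destruct ip as [|ip']; [simpl in Hip; injection Hip as E; congruence|].
    destruct (sub_walk _ 1 (S ip') _ _ Hcc ltac:(lia) Hx1 Hip) as [P [WP [LP HP]]].
    destruct (gdist_walk p q) as [M [WM LM]].
    destruct (sub_walk _ 1 Dd _ _ Hcg ltac:(unfold Dd; lia) Hy1 Hq) as [Q [WQ [LQ HQ']]].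
    destruct (walk_rev _ _ _ WQ) as [Q' [WQ' [LQ' HQ'']]].
    exists (length (P ++ M ++ Q')). split.
    + assert (Hm := HQ 0 (S ip') a p ltac:(lia) eq_refl Hip).
      rewrite Nat.sub_0_r in Hm.
      pose proof (gdist_tri a q p).
      assert (k * INR (d a p) <= k * INR (Rm + 1 + Rm)).
      { apply Rmult_le_compat_l; auto. apply le_INR. unfold Dd in Haq. lia. }
      assert (Hb : (length (P ++ M ++ Q') <= S ip' + Rm + Dd)%nat).
      { rewrite !length_app. rewrite gdist_sym in Hqp. lia. }
      apply le_INR in Hb. rewrite !plus_INR in Hb. unfold Dd in *. lra.
    + exists (P ++ M ++ Q'). repeat split; auto.
      * eapply walk_app; eauto. eapply walk_app; eauto.
      * intros Hin. apply in_app_or in Hin. destruct Hin as [Hin|Hin].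
        -- destruct (HP a Hin) as [t [Ht Ht']]. destruct t; [lia|]. exact (Hrc_a t a Ht' eq_refl).
        -- apply in_app_or in Hin. destruct Hin as [Hin|Hin].
           ++ assert (Hv := walk_suf _ _ _ _ WM (or_intror Hin)). rewrite LM in Hv.
              rewrite (gdist_sym p q) in Hv. unfold Dd in Haq. lia.
           ++ destruct (HQ'' a Hin) as [E|Hin'].
              ** exact (Hsg_a 0%nat y1 Hy1 (eq_sym E)).
              ** destruct (HQ' a Hin') as [t [Ht Ht']]. destruct t; [lia|]. exact (Hsg_a t a Ht' eq_refl).
Qed.

End G.
Lemma numeric (delta k l : R) : 0 < k -> 0 < l -> exists Rm : nat,
  forall D L j : nat, INR L <= (2 + 6*k) * INR D + l ->
  (j = 0 \/ 2^(j-1) < L)%nat -> INR D <= 1 + INR j * delta -> (D <= Rm)%nat.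
Proof.
  intros Hk Hl.
  destruct (nat_above delta) as [T HT]. destruct (nat_above (2 + 6*k + l)) as [K HK].
  set (M := (K*(2+T) + K*T + 4)%nat).
  exists (1 + M*T)%nat. intros D L j HL Hj HD.
  assert (HD' : (D <= 1 + j*T)%nat).
  { apply INR_le. rewrite plus_INR, mult_INR. replace (INR 1) with 1 by reflexivity.
    assert (INR j * delta <= INR j * INR T) by (apply Rmult_le_compat_l; [apply pos_INR|auto]). lra. }
  assert (HL' : (L <= K*(D+1))%nat).
  { apply INR_le. rewrite mult_INR, plus_INR. replace (INR 1) with 1 by reflexivity.
    pose proof (pos_INR D).
    assert ((2 + 6*k) * INR D <= INR K * INR D) by (apply Rmult_le_compat_r; lra). nra. }
  destruct Hj as [Hj|Hj].
  - subst j. nia.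
  - assert (Hjm : (j <= M)%nat).
    { destruct (le_lt_dec j M) as [H|H]; auto. exfalso.
      set (i := (j - 1)%nat) in *.
      assert (Hi : (M <= i)%nat) by (unfold i; lia).
      assert (Hsq := pow_sq (i - 4)). replace (i - 4 + 4)%nat with i in Hsq by (unfold M in Hi; lia).
      assert (Hj' : j = (i + 1)%nat) by (unfold i; lia).
      assert (H1 : (2^i < K*(2 + (i+1)*T))%nat) by (rewrite Hj' in HD'; nia).
      assert (H2 : (i * M <= i * i)%nat) by nia.
      unfold M in H2. nia. }
    nia.
Qed.

Section Ang.
Variable V : Type.
Variable adj : V -> V -> Prop.
Hypothesis Hsym : forall u v, adj u v -> adj v u.

Lemma walk_end_in x p y : walk adj x p y -> y = x \/ In y p.
Proof.
  revert x; induction p as [|z p IH]; simpl; intros x W.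
  - auto.
  - destruct W as [_ W]. destruct (IH z W); subst; auto.
Qed.

Lemma avoid_trans v n1 n2 x y z : avoid_reach V adj v n1 x y -> avoid_reach V adj v n2 y z ->
  avoid_reach V adj v (n1 + n2) x z.
Proof.
  intros [p [W [L [Hx Hp]]]] [q [W' [L' [Hy Hq]]]].
  exists (p ++ q). repeat split; auto.
  - eapply walk_app; eauto.
  - rewrite length_app; lia.
  - intros H. apply in_app_or in H; tauto.
Qed.

Lemma avoid_sym v n x y : avoid_reach V adj v n x y -> avoid_reach V adj v n y x.
Proof.
  intros [p [W [L [Hx Hp]]]].
  destruct (walk_rev V adj Hsym _ _ _ W) as [p' [W' [L' H']]].
  exists p'. split; [auto|split; [lia|split]].
  - destruct (walk_end_in _ _ _ W) as [E|E]; intros E'; subst; auto.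
  - intros H. destruct (H' v H) as [E|E]; subst; auto.
Qed.

Lemma angle_fin v n x y : avoid_reach V adj v n x y ->
  exists m, angle_pts adj v x y = Finite (INR m) /\ (m <= n)%nat /\ avoid_reach V adj v m x y.
Proof.
  intros H. unfold angle_pts. destruct (excluded_middle_informative _) as [H0|H0].
  - destruct (constructive_indefinite_description _ H0) as [m [Hm1 Hm2]]; simpl.
    exists m; auto.
  - exfalso. apply H0. destruct (least_nat (fun n => avoid_reach V adj v n x y)) as [m Hm].
    + exists n; exact H.
    + exists m. exact Hm.
Qed.

Lemma angle_cases v x y : angle_pts adj v x y = p_infty \/
  exists m, angle_pts adj v x y = Finite (INR m) /\ avoid_reach V adj v m x y.
Proof.
  unfold angle_pts. destruct (excluded_middle_informative _) as [H0|H0]; auto.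
  destruct (constructive_indefinite_description _ H0) as [m [Hm1 Hm2]]; simpl.
  right; exists m; auto.
Qed.

Lemma angle_compare v x1 x2 y1 y2 N1 N2 (C : R) :
  avoid_reach V adj v N1 x1 y1 -> avoid_reach V adj v N2 x2 y2 ->
  INR N1 <= C -> INR N2 <= C ->
  Rbar_le (Rbar_minus (angle_pts adj v x1 x2) (Finite (2*C))) (angle_pts adj v y1 y2) /\
  Rbar_le (angle_pts adj v y1 y2) (Rbar_plus (angle_pts adj v x1 x2) (Finite (2*C))) /\
  (angle_pts adj v x1 x2 = p_infty <-> angle_pts adj v y1 y2 = p_infty).
Proof.
  intros A1 A2 C1 C2.
  destruct (angle_cases v x1 x2) as [Ea|[m [Ea Am]]].
  - destruct (angle_cases v y1 y2) as [Eb|[m' [Eb Bm]]].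
    + rewrite Ea, Eb. simpl. tauto.
    + exfalso.
      assert (H := avoid_trans _ _ _ _ _ _ (avoid_trans _ _ _ _ _ _ A1 Bm) (avoid_sym _ _ _ _ A2)).
      destruct (angle_fin _ _ _ _ H) as [m0 [E _]]. congruence.
  - assert (H := avoid_trans _ _ _ _ _ _ (avoid_trans _ _ _ _ _ _ (avoid_sym _ _ _ _ A1) Am) A2).
    destruct (angle_fin _ _ _ _ H) as [m' [Eb [Hm' Bm]]].
    assert (H2 := avoid_trans _ _ _ _ _ _ (avoid_trans _ _ _ _ _ _ A1 Bm) (avoid_sym _ _ _ _ A2)).
    destruct (angle_fin _ _ _ _ H2) as [m0 [E0 [Hm0 _]]].
    rewrite Ea in E0. injection E0 as E0. apply INR_eq in E0. subst m0.
    rewrite Ea, Eb. simpl.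
    apply le_INR in Hm', Hm0. rewrite !plus_INR in Hm', Hm0.
    repeat split; try lra; intros E; discriminate.
Qed.
End Ang.

Theorem lemma4p6 :
  forall (delta k l : R), 0 < k -> 0 < l ->
  exists lam : R,
  forall (A : group) (I : Type) (O : I -> A -> Prop) (X : A -> Prop),
    finite_type I ->
    (forall i, subgroup (O i)) ->
    (forall i, infinite_set (O i)) ->
    hyp_embedded O X ->
    hyperbolic_graph (cone_adj O X) delta ->
    forall (a : apex A I O) (r1 r2 s1 s2 : list (cvertex O)),
      let av : cvertex O := inr a in
      r1 <> [] -> r2 <> [] ->
      quasi_geodesic (cone_adj O X) k l (av :: r1) ->
      quasi_geodesic (cone_adj O X) k l (av :: r2) ->
      ~ In av r1 -> ~ In av r2 ->
      geodesic (cone_adj O X) (av :: s1) ->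
      geodesic (cone_adj O X) (av :: s2) ->
      last (av :: s1) av = last (av :: r1) av ->
      last (av :: s2) av = last (av :: r2) av ->
      Rbar_le (Rbar_minus (angle_paths (cone_adj O X) av r1 r2) (Finite lam))
              (angle_paths (cone_adj O X) av s1 s2) /\
      Rbar_le (angle_paths (cone_adj O X) av s1 s2)
              (Rbar_plus (angle_paths (cone_adj O X) av r1 r2) (Finite lam)) /\
      (angle_paths (cone_adj O X) av r1 r2 = p_infty <->
       angle_paths (cone_adj O X) av s1 s2 = p_infty).
Proof.
  intros delta k l Hk Hl.
  destruct (numeric delta k l Hk Hl) as [Rm HR].
  exists (2 * (k * INR (Rm + 1 + Rm) + l + INR Rm + INR (Rm + 1))).
  intros A I O X _ _ _ _ [Hconn H4] a r1 r2 s1 s2 av Hr1 Hr2 [_ [Hc1 HQ1]] [_ [Hc2 HQ2]]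
    Hn1 Hn2 [Hg1c Hg1] [Hg2c Hg2] Hl1 Hl2.
  assert (Hsym : forall u v, cone_adj O X u v -> cone_adj O X v u).
  { intros [g|c] [h|c']; simpl; auto.
    intros [x [Hx [E|E]]]; exists x; split; auto. }
  destruct (key _ _ Hsym Hconn delta H4 k l Hk Rm HR av r1 s1 Hc1 HQ1 Hg1c Hg1 Hl1 Hr1 Hn1)
    as [N1 [C1 A1]].
  destruct (key _ _ Hsym Hconn delta H4 k l Hk Rm HR av r2 s2 Hc2 HQ2 Hg2c Hg2 Hl2 Hr2 Hn2)
    as [N2 [C2 A2]].
  unfold angle_paths.
  exact (angle_compare _ _ Hsym _ _ _ _ _ _ _ _ A1 A2 C1 C2).
Qed.
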